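(* Let $f_1,f_2$ be strongly hyperbolic functions, $a_1,a_2>0$, $b_1,b_2,c_1,c_2\in\mathbb{R}$ with $(a_1,b_1,c_1)\neq(a_2,b_2,c_2)$, and let $D_1=\overline{f_{a_1,b_1,c_1}}$, $D_2=\overline{f_{a_2,b_2,c_2}}$. If one of the following holds, then $D_1\cap D_2=\{p\}$: (1) $p=(b,\infty)$, $a_1=a_2$, $b_1=b_2=-b$ and $c_1\neq c_2$; (2) $p=(\infty,c)$, $a_1=a_2$, $b_1\neq b_2$ and $c_1=c_2=c$; (3) $p=(x_p,y_p)\in\mathbb{R}^2$, $f_{a_1,b_1,c_1}(x_p)=f_{a_2,b_2,c_2}(x_p)=y_p$ and $f'_{a_1,b_1,c_1}(x_p)=f'_{a_2,b_2,c_2}(x_p)$.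
   Context: Identify $\mathbb{S}^1$ with $\mathbb{R}\cup\{\infty\}$, $\mathcal{P}=\mathbb{S}^1\times\mathbb{S}^1$, $\mathbb{R}^+=(0,\infty)$. A function $f:\mathbb{R}^+\to\mathbb{R}^+$ is strongly hyperbolic if: (1) $\lim_{x\to0+}f(x)=+\infty$, $\lim_{x\to+\infty}f(x)=0$; (2) $f$ strictly convex; (3) $\lim_{x\to+\infty}f(x+b)/f(x)=1$ for each $b\in\mathbb{R}$; (4) $f$ differentiable; (5) $\ln|f'|$ strictly convex. For $a>0$, $b,c\in\mathbb{R}$: $f_{a,b,c}:\mathbb{R}\setminus\{-b\}\to\mathbb{R}$, $f_{a,b,c}(x)=af_1(x+b)+c$ for $x>-b$, $f_{a,b,c}(x)=-af_2(-x-b)+c$ for $x<-b$; $\overline{f_{a,b,c}}=\{(x,f_{a,b,c}(x)):x\ne-b\}\cup\{(-b,\infty),(\infty,c)\}\subset\mathcal{P}$. *)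

(* Defs.v *)
From Stdlib Require Import Reals Lra.
From Coquelicot Require Import Coquelicot.
Open Scope R_scope.

(* S^1 = R ∪ {∞}: None is ∞. *)
Definition S1 : Type := option R.
Definition Pt : Type := (S1 * S1)%type.

Definition strictly_convex_pos (g : R -> R) : Prop :=
  forall x y t, 0 < x -> 0 < y -> x <> y -> 0 < t < 1 ->
    g (t * x + (1 - t) * y) < t * g x + (1 - t) * g y.

(* f : R^+ -> R^+ strongly hyperbolic (only values on (0,+oo) matter). *)
Definition strongly_hyperbolic (f : R -> R) : Prop :=
  (forall x, 0 < x -> 0 < f x) /\
  filterlim f (at_right 0) (Rbar_locally p_infty) /\
  filterlim f (Rbar_locally p_infty) (locally 0) /\
  strictly_convex_pos f /\
  (forall b : R, filterlim (fun x => f (x + b) / f x) (Rbar_locally p_infty) (locally 1)) /\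
  (forall x, 0 < x -> ex_derive f x) /\
  strictly_convex_pos (fun x => ln (Rabs (Derive f x))).

(* f_{a,b,c} built from f1, f2 (its value at -b is irrelevant). *)
Definition fabc (f1 f2 : R -> R) (a b c : R) (x : R) : R :=
  if Rlt_dec (- b) x then a * f1 (x + b) + c
  else - a * f2 (- x - b) + c.

(* closure of the graph of f_{a,b,c} in P = S^1 × S^1 *)
Definition Dbar (f1 f2 : R -> R) (a b c : R) (q : Pt) : Prop :=
  (exists x, x <> - b /\ q = (Some x, Some (fabc f1 f2 a b c x))) \/
  q = (Some (- b), None) \/ q = (None, Some c).

(* Main.v *)
Require Import Defs.
From Stdlib Require Import Reals Lra Psatz.
From Coquelicot Require Import Coquelicot.
Open Scope R_scope.

Lemma lim0_pinf (f : R -> R) : filterlim f (Rbar_locally p_infty) (locally 0) ->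
  forall eps, 0 < eps -> exists M, forall y, M < y -> Rabs (f y) < eps.
Proof.
  intros H eps Heps.
  assert (Hl : locally 0 (fun z => Rabs z < eps)).
  { exists (mkposreal eps Heps). intros z Hz. 
    unfold ball in Hz; simpl in Hz; unfold AbsRing_ball, abs, minus, plus, opp in Hz; simpl in Hz.
    replace z with (z + - 0) by ring. exact Hz. }
  destruct (H _ Hl) as [M HM]. exists M. exact HM.
Qed.

Lemma tangent (f : R -> R) : strictly_convex_pos f -> forall u w, 0 < u -> 0 < w -> u <> w ->
  ex_derive f u -> f u + Derive f u * (w - u) < f w.
Proof.
  intros Hc u w Hu Hw Huw Hex.
  set (l := Derive f u).
  assert (Hd : derivable_pt_lim f u l) by (apply is_derive_Reals; apply Derive_correct; exact Hex).
  set (m := (u + w) / 2).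
  assert (Hm : 0 < m) by (unfold m; lra).
  assert (Hmu : m <> u) by (unfold m; lra).
  assert (Hstep : f u + l * (m - u) <= f m).
  { destruct (Rle_or_lt (f u + l * (m - u)) (f m)) as [H|H]; [exact H|exfalso].
    set (dl := f u + l * (m - u) - f m).
    set (k := m - u).
    assert (Hk : 0 < Rabs k) by (apply Rabs_pos_lt; unfold k; lra).
    assert (Hdl : 0 < dl) by (unfold dl; lra).
    assert (Heps : 0 < dl / (2 * Rabs k)) by (apply Rdiv_lt_0_compat; lra).
    destruct (Hd _ Heps) as [delta Hdelta].
    pose proof (cond_pos delta) as Hdp.
    set (t := Rmin (1/2) (delta / (2 * Rabs k))).
    assert (Ht0 : 0 < t) by (unfold t; apply Rmin_pos; [lra| apply Rdiv_lt_0_compat; lra]).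
    assert (Ht1 : t <= 1/2) by (unfold t; apply Rmin_l).
    assert (Ht2 : t <= delta / (2 * Rabs k)) by (unfold t; apply Rmin_r).
    assert (Hh0 : t * k <> 0) by (apply Rmult_integral_contrapositive; split; unfold k; lra).
    assert (Hhd : Rabs (t * k) < delta).
    { rewrite Rabs_mult, (Rabs_right t) by lra.
      apply Rle_lt_trans with (delta / (2 * Rabs k) * Rabs k).
      - apply Rmult_le_compat_r; [lra|exact Ht2].
      - field_simplify; lra. }
    specialize (Hdelta (t * k) Hh0 Hhd).
    assert (HA : Rabs (f (u + t * k) - f u - l * (t * k)) < dl / (2 * Rabs k) * Rabs (t * k)).
    { replace (f (u + t * k) - f u - l * (t * k)) with (((f (u + t * k) - f u) / (t * k) - l) * (t * k))
        by (field; split; [unfold k; lra | lra]).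
      rewrite Rabs_mult. apply Rmult_lt_compat_r; [apply Rabs_pos_lt; exact Hh0|exact Hdelta]. }
    rewrite Rabs_mult, (Rabs_right t) in HA by lra.
    replace (dl / (2 * Rabs k) * (t * Rabs k)) with (t * dl / 2) in HA by (field; lra).
    destruct (Rabs_def2 _ _ HA) as [HA1 HA2].
    assert (Ht3 : 0 < t < 1) by lra.
    assert (Hcv := Hc m u t Hm Hu Hmu Ht3).
    replace (t * m + (1 - t) * u) with (u + t * k) in Hcv by (unfold k; ring).
    assert (t * dl > 0) by (apply Rmult_lt_0_compat; lra).
    assert (Heq : t * f m + (1 - t) * f u - f u = l * (t * k) - t * dl) by (unfold dl, k; ring).
    lra. }
  assert (Hmid : f m < 1/2 * f u + (1 - 1/2) * f w).
  { unfold m. replace ((u + w) / 2) with (1/2 * u + (1 - 1/2) * w) by field.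
    apply Hc; lra. }
  replace (w - u) with (2 * (m - u)) by (unfold m; field). lra.
Qed.


Lemma chord (H : R -> R) : strictly_convex_pos H -> forall p q r, 0 < p -> p < q -> q < r ->
  (r - p) * H q < (r - q) * H p + (q - p) * H r.
Proof.
  intros Hc p q r Hp Hpq Hqr.
  set (t := (r - q) / (r - p)).
  assert (Ht : 0 < t < 1).
  { unfold t; split. apply Rdiv_lt_0_compat; lra.
    apply (Rmult_lt_reg_r (r - p)); [lra|]. unfold Rdiv. rewrite Rmult_assoc, Rinv_l by lra. lra. }
  assert (Hq : q = t * p + (1 - t) * r) by (unfold t; field; lra).
  pose proof (Hc p r t Hp ltac:(lra) ltac:(lra) Ht) as Hcv. rewrite <- Hq in Hcv.
  apply (Rmult_lt_compat_l (r - p)) in Hcv; [|lra].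
  replace ((r - p) * (t * H p + (1 - t) * H r)) with ((r - q) * H p + (q - p) * H r) in Hcv
    by (unfold t; field; lra). exact Hcv.
Qed.

Lemma delta_incr (H : R -> R) : strictly_convex_pos H -> forall y z d, 0 < y -> y < z -> 0 < d ->
  H (y + d) - H y < H (z + d) - H z.
Proof.
  intros Hc y z d Hy Hyz Hd.
  pose proof (chord H Hc y (y + d) (z + d) Hy ltac:(lra) ltac:(lra)) as H1.
  pose proof (chord H Hc y z (z + d) Hy ltac:(lra) ltac:(lra)) as H2.
  apply (Rmult_lt_reg_r (z + d - y)); [lra|]. nra.
Qed.


Lemma sh_pos (f : R -> R) (Hf : strongly_hyperbolic f) : forall x, 0 < x -> 0 < f x.
Proof. apply Hf. Qed.
Lemma sh_conv (f : R -> R) (Hf : strongly_hyperbolic f) : strictly_convex_pos f.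
Proof. apply Hf. Qed.
Lemma sh_ex (f : R -> R) (Hf : strongly_hyperbolic f) : forall x, 0 < x -> ex_derive f x.
Proof. apply Hf. Qed.
Lemma sh_lnconv (f : R -> R) (Hf : strongly_hyperbolic f) : strictly_convex_pos (fun x => ln (Rabs (Derive f x))).
Proof. apply Hf. Qed.
Lemma sh_lim (f : R -> R) (Hf : strongly_hyperbolic f) : forall eps, 0 < eps -> exists M, forall y, M < y -> f y < eps.
Proof.
  intros eps He. destruct (lim0_pinf f (proj1 (proj2 (proj2 Hf))) eps He) as [M HM].
  exists M. intros y Hy. specialize (HM y Hy). apply Rabs_def2 in HM. lra.
Qed.

Lemma sh_tan (f : R -> R) (Hf : strongly_hyperbolic f) : forall u w, 0 < u -> 0 < w -> u <> w -> f u + Derive f u * (w - u) < f w.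
Proof. intros. apply tangent; auto. apply (sh_conv f Hf). apply (sh_ex f Hf); auto. Qed.

Lemma sh_dneg (f : R -> R) (Hf : strongly_hyperbolic f) : forall u, 0 < u -> Derive f u < 0.
Proof.
  intros u Hu. destruct (Rlt_or_le (Derive f u) 0) as [H|H]; [exact H|exfalso].
  destruct (sh_lim f Hf (f u) (sh_pos f Hf u Hu)) as [M HM].
  set (w := Rmax M u + 1).
  assert (Hw : u < w) by (unfold w; pose proof (Rmax_r M u); lra).
  assert (HwM : M < w) by (unfold w; pose proof (Rmax_l M u); lra).
  pose proof (sh_tan f Hf u w Hu ltac:(lra) ltac:(lra)). specialize (HM w HwM). nra.
Qed.

Lemma sh_decr (f : R -> R) (Hf : strongly_hyperbolic f) : forall u w, 0 < u -> u < w -> f w < f u.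
Proof.
  intros u w Hu Huw. pose proof (sh_tan f Hf w u ltac:(lra) Hu ltac:(lra)).
  pose proof (sh_dneg f Hf w ltac:(lra)). nra.
Qed.

Lemma sh_dincr (f : R -> R) (Hf : strongly_hyperbolic f) : forall u w, 0 < u -> u < w -> Derive f u < Derive f w.
Proof.
  intros u w Hu Huw. pose proof (sh_tan f Hf w u ltac:(lra) Hu ltac:(lra)).
  pose proof (sh_tan f Hf u w Hu ltac:(lra) ltac:(lra)). nra.
Qed.


Lemma mvt_pos (phi dphi : R -> R) : (forall x, 0 < x -> is_derive phi x (dphi x)) ->
  forall y z, 0 < y -> y < z -> exists c, y <= c <= z /\ phi z - phi y = dphi c * (z - y).
Proof.
  intros Hd y z Hy Hyz.
  destruct (MVT_gen phi y z dphi) as [c [Hc Heq]].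
  - intros x Hx. rewrite Rmin_left in Hx by lra. apply Hd. lra.
  - intros x Hx. rewrite Rmin_left in Hx by lra. apply continuity_pt_filterlim.
    apply (ex_derive_continuous phi x). exists (dphi x). apply Hd. lra.
  - rewrite Rmin_left, Rmax_right in Hc by lra. exists c. split; auto.
Qed.

Lemma caseJ f1 f2 a1 a2 b1 b2 c1 c2 xp :
  strongly_hyperbolic f1 -> strongly_hyperbolic f2 -> 0 < a1 -> 0 < a2 -> b2 < b1 -> - b2 < xp ->
  a1 * f1 (xp + b1) + c1 = a2 * f1 (xp + b2) + c2 ->
  a1 * Derive f1 (xp + b1) = a2 * Derive f1 (xp + b2) ->
  c1 < c2 /\ forall x, x <> - b1 -> x <> - b2 -> x <> xp ->
     fabc f1 f2 a1 b1 c1 x <> fabc f1 f2 a2 b2 c2 x.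
Proof.
  intros Hf1 Hf2 Ha1 Ha2 Hb Hxp Hval Hder.
  set (d := b1 - b2). set (v := xp + b2).
  assert (Hd : 0 < d) by (unfold d; lra).
  assert (Hv : 0 < v) by (unfold v; lra).
  replace (xp + b1) with (v + d) in Hval, Hder by (unfold v, d; ring).
  fold v in Hval, Hder.
  set (phi := fun y => a1 * f1 (y + d) - a2 * f1 y).
  set (dphi := fun y => a1 * Derive f1 (y + d) - a2 * Derive f1 y).
  assert (Hphi : forall y, 0 < y -> is_derive phi y (dphi y)).
  { intros y Hy. unfold phi, dphi. auto_derive.
    split; [apply (sh_ex f1 Hf1); lra | split; [apply (sh_ex f1 Hf1); lra | auto]].
    rewrite !Rmult_1_l. reflexivity. }
  assert (Hsign : forall c, 0 < c -> (v < c -> dphi c < 0) /\ (c < v -> 0 < dphi c)).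
  { intros c Hc.
    set (H := fun x => ln (Rabs (Derive f1 x))).
    assert (HH : forall x, 0 < x -> H x = ln (- Derive f1 x)).
    { intros x Hx. unfold H. rewrite Rabs_left; auto. apply (sh_dneg f1 Hf1); auto. }
    assert (Hn : forall x, 0 < x -> 0 < - Derive f1 x).
    { intros x Hx. pose proof (sh_dneg f1 Hf1 x Hx). lra. }
    assert (Hrel : ln a1 + H (v + d) = ln a2 + H v).
    { rewrite !HH by lra. rewrite <- !ln_mult by (try apply Hn; lra).
      f_equal. lra. }
    pose proof (Hn c Hc). pose proof (Hn (c + d) ltac:(lra)).
    split; intro Hcv.
    - pose proof (delta_incr H (sh_lnconv f1 Hf1) v c d Hv Hcv Hd).
      assert (ln (a2 * - Derive f1 c) < ln (a1 * - Derive f1 (c + d))).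
      { rewrite !ln_mult by lra. rewrite <- !HH by lra. lra. }
      apply ln_lt_inv in H3; [|nra|nra]. unfold dphi. lra.
    - pose proof (delta_incr H (sh_lnconv f1 Hf1) c v d Hc Hcv Hd).
      assert (ln (a1 * - Derive f1 (c + d)) < ln (a2 * - Derive f1 c)).
      { rewrite !ln_mult by lra. rewrite <- !HH by lra. lra. }
      apply ln_lt_inv in H3; [|nra|nra]. unfold dphi. lra. }
  assert (Hdv : dphi v = 0) by (unfold dphi; lra).
  assert (Hdec_w : forall y z, v <= y -> y < z -> phi z <= phi y).
  { intros y z Hy Hyz. destruct (mvt_pos phi dphi Hphi y z ltac:(lra) Hyz) as [c [Hc Heq]].
    destruct (Req_dec c v) as [E|E]. subst c. rewrite Hdv in Heq. lra.
    pose proof (proj1 (Hsign c ltac:(lra)) ltac:(lra)). nra. }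
  assert (Hdec : forall y z, v <= y -> y < z -> phi z < phi y).
  { intros y z Hy Hyz.
    pose proof (Hdec_w y ((y + z) / 2) Hy ltac:(lra)).
    destruct (mvt_pos phi dphi Hphi ((y + z) / 2) z ltac:(lra) ltac:(lra)) as [c [Hc Heq]].
    pose proof (proj1 (Hsign c ltac:(lra)) ltac:(lra)). nra. }
  assert (Hinc_w : forall y z, 0 < y -> y < z -> z <= v -> phi y <= phi z).
  { intros y z Hy0 Hyz Hz. destruct (mvt_pos phi dphi Hphi y z ltac:(lra) Hyz) as [c [Hc Heq]].
    destruct (Req_dec c v) as [E|E]. subst c. rewrite Hdv in Heq. lra.
    pose proof (proj2 (Hsign c ltac:(lra)) ltac:(lra)). nra. }
  assert (Hinc : forall y z, 0 < y -> y < z -> z <= v -> phi y < phi z).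
  { intros y z Hy0 Hyz Hz.
    pose proof (Hinc_w ((y + z) / 2) z ltac:(lra) ltac:(lra) Hz).
    destruct (mvt_pos phi dphi Hphi y ((y + z) / 2) ltac:(lra) ltac:(lra)) as [c [Hc Heq]].
    pose proof (proj2 (Hsign c ltac:(lra)) ltac:(lra)). nra. }
  assert (Hmax : forall y, 0 < y -> y <> v -> phi y < phi v).
  { intros y Hy Hyv. destruct (Rlt_or_le y v). apply Hinc; lra. apply Hdec; lra. }
  assert (Hpos : 0 < phi v).
  { destruct (Rlt_or_le 0 (phi v)) as [H|H]; [exact H|exfalso].
    pose proof (Hdec v (v + 1) ltac:(lra) ltac:(lra)) as H1.
    destruct (sh_lim f1 Hf1 (- phi (v + 1) / a2)) as [M HM].
    { apply Rdiv_lt_0_compat; lra. }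
    set (y := Rmax M (v + 1) + 1).
    assert (Hy1 : v + 1 < y) by (unfold y; pose proof (Rmax_r M (v + 1)); lra).
    assert (HyM : M < y) by (unfold y; pose proof (Rmax_l M (v + 1)); lra).
    pose proof (Hdec (v + 1) y ltac:(lra) Hy1).
    specialize (HM y HyM).
    pose proof (sh_pos f1 Hf1 (y + d) ltac:(lra)).
    assert (a2 * f1 y < - phi (v + 1)).
    { apply (Rmult_lt_compat_l a2) in HM; [|lra].
      replace (a2 * (- phi (v + 1) / a2)) with (- phi (v + 1)) in HM by (field; lra). exact HM. }
    assert (Ey : phi y = a1 * f1 (y + d) - a2 * f1 y) by reflexivity.
    nra. }
  assert (Hc12 : c2 - c1 = phi v) by (unfold phi; lra).
  split; [lra|].
  intros x Hx1 Hx2 Hxx Heq. unfold fabc in Heq.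
  destruct (Rlt_dec (- b1) x) as [L1|L1]; destruct (Rlt_dec (- b2) x) as [L2|L2].
  -
    assert (Hy := Hmax (x + b2) ltac:(lra) ltac:(unfold v; lra)).
    unfold phi in Hy. replace (x + b2 + d) with (x + b1) in Hy by (unfold d; ring). lra.
  -
    assert (f1 (v + d) < f1 (x + b1)) by (apply (sh_decr f1 Hf1); unfold v, d; lra).
    pose proof (sh_pos f1 Hf1 v Hv). pose proof (sh_pos f2 Hf2 (- x - b2) ltac:(lra)).
    unfold phi in Hc12. nra.
  - lra.
  -
    assert (f2 (- x - b2) < f2 (- x - b1)) by (apply (sh_decr f2 Hf2); unfold d in Hd; lra).
    pose proof (sh_pos f2 Hf2 (- x - b2) ltac:(lra)).
    assert (a2 < a1).
    { pose proof (sh_dincr f1 Hf1 v (v + d) Hv ltac:(lra)).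
      pose proof (sh_dneg f1 Hf1 (v + d) ltac:(lra)). nra. }
    nra.
Qed.


Lemma caseM f1 f2 a1 a2 b1 b2 c1 c2 xp :
  strongly_hyperbolic f1 -> strongly_hyperbolic f2 -> 0 < a1 -> 0 < a2 -> b2 < b1 ->
  - b1 < xp -> xp < - b2 ->
  a1 * f1 (xp + b1) + c1 = - a2 * f2 (- xp - b2) + c2 ->
  a1 * Derive f1 (xp + b1) = a2 * Derive f2 (- xp - b2) ->
  c1 < c2 /\ forall x, x <> - b1 -> x <> - b2 -> x <> xp ->
     fabc f1 f2 a1 b1 c1 x <> fabc f1 f2 a2 b2 c2 x.
Proof.
  intros Hf1 Hf2 Ha1 Ha2 Hb H1 H2 Hval Hder.
  pose proof (sh_pos f1 Hf1 (xp + b1) ltac:(lra)).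
  pose proof (sh_pos f2 Hf2 (- xp - b2) ltac:(lra)).
  split; [nra|].
  intros x Hx1 Hx2 Hxx Heq. unfold fabc in Heq.
  destruct (Rlt_dec (- b1) x) as [L1|L1]; destruct (Rlt_dec (- b2) x) as [L2|L2].
  - assert (f1 (x + b1) < f1 (xp + b1)) by (apply (sh_decr f1 Hf1); lra).
    pose proof (sh_pos f1 Hf1 (x + b2) ltac:(lra)). nra.
  - pose proof (sh_tan f1 Hf1 (xp + b1) (x + b1) ltac:(lra) ltac:(lra) ltac:(lra)).
    pose proof (sh_tan f2 Hf2 (- xp - b2) (- x - b2) ltac:(lra) ltac:(lra) ltac:(lra)).
    nra.
  - lra.
  - assert (f2 (- x - b2) < f2 (- xp - b2)) by (apply (sh_decr f2 Hf2); lra).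
    pose proof (sh_pos f2 Hf2 (- x - b1) ltac:(lra)). nra.
Qed.

Lemma mirror f1 f2 a b c x : x <> - b ->
  fabc f1 f2 a b c x = - fabc f2 f1 a (- b) (- c) (- x).
Proof.
  intros Hx. unfold fabc.
  destruct (Rlt_dec (- b) x); destruct (Rlt_dec (- - b) (- x)); try lra.
  - replace (- - x - - b) with (x + b) by ring. ring.
  - replace (- x + - b) with (- x - b) by ring. ring.
Qed.

Lemma caseI f1 f2 a1 a2 b1 b2 c1 c2 xp :
  strongly_hyperbolic f1 -> strongly_hyperbolic f2 -> 0 < a1 -> 0 < a2 -> b2 < b1 ->
  xp < - b1 ->
  - a1 * f2 (- xp - b1) + c1 = - a2 * f2 (- xp - b2) + c2 ->
  a1 * Derive f2 (- xp - b1) = a2 * Derive f2 (- xp - b2) ->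
  c1 < c2 /\ forall x, x <> - b1 -> x <> - b2 -> x <> xp ->
     fabc f1 f2 a1 b1 c1 x <> fabc f1 f2 a2 b2 c2 x.
Proof.
  intros Hf1 Hf2 Ha1 Ha2 Hb H1 Hval Hder.
  destruct (caseJ f2 f1 a2 a1 (- b2) (- b1) (- c2) (- c1) (- xp) Hf2 Hf1 Ha2 Ha1 ltac:(lra) ltac:(lra))
    as [Hc Hx].
  - replace (- xp + - b2) with (- xp - b2) by ring. replace (- xp + - b1) with (- xp - b1) by ring. lra.
  - replace (- xp + - b2) with (- xp - b2) by ring. replace (- xp + - b1) with (- xp - b1) by ring. lra.
  - split; [lra|]. intros x Hx1 Hx2 Hxx Heq.
    rewrite (mirror f1 f2 a1 b1 c1 x Hx1), (mirror f1 f2 a2 b2 c2 x Hx2) in Heq.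
    apply (Hx (- x)); lra.
Qed.

Definition brD (f1 f2 : R -> R) a b x :=
  if Rlt_dec (- b) x then a * Derive f1 (x + b) else a * Derive f2 (- x - b).

Lemma core_lt f1 f2 a1 a2 b1 b2 c1 c2 xp :
  strongly_hyperbolic f1 -> strongly_hyperbolic f2 -> 0 < a1 -> 0 < a2 -> b2 < b1 ->
  xp <> - b1 -> xp <> - b2 ->
  fabc f1 f2 a1 b1 c1 xp = fabc f1 f2 a2 b2 c2 xp ->
  brD f1 f2 a1 b1 xp = brD f1 f2 a2 b2 xp ->
  c1 <> c2 /\ forall x, x <> - b1 -> x <> - b2 -> x <> xp ->
     fabc f1 f2 a1 b1 c1 x <> fabc f1 f2 a2 b2 c2 x.
Proof.
  intros Hf1 Hf2 Ha1 Ha2 Hb Hx1 Hx2 Hval Hder.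
  unfold fabc in Hval at 1 2; unfold brD in Hder.
  destruct (Rlt_dec (- b1) xp) as [L1|L1]; destruct (Rlt_dec (- b2) xp) as [L2|L2].
  - destruct (caseJ f1 f2 a1 a2 b1 b2 c1 c2 xp Hf1 Hf2 Ha1 Ha2 Hb L2 Hval Hder) as [A B].
    split; [lra|exact B].
  - destruct (caseM f1 f2 a1 a2 b1 b2 c1 c2 xp Hf1 Hf2 Ha1 Ha2 Hb L1 ltac:(lra) Hval Hder) as [A B].
    split; [lra|exact B].
  - lra.
  - destruct (caseI f1 f2 a1 a2 b1 b2 c1 c2 xp Hf1 Hf2 Ha1 Ha2 Hb ltac:(lra) Hval Hder) as [A B].
    split; [lra|exact B].
Qed.

Lemma core f1 f2 a1 a2 b1 b2 c1 c2 xp :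
  strongly_hyperbolic f1 -> strongly_hyperbolic f2 -> 0 < a1 -> 0 < a2 ->
  (a1, b1, c1) <> (a2, b2, c2) ->
  xp <> - b1 -> xp <> - b2 ->
  fabc f1 f2 a1 b1 c1 xp = fabc f1 f2 a2 b2 c2 xp ->
  brD f1 f2 a1 b1 xp = brD f1 f2 a2 b2 xp ->
  b1 <> b2 /\ c1 <> c2 /\ forall x, x <> - b1 -> x <> - b2 -> x <> xp ->
     fabc f1 f2 a1 b1 c1 x <> fabc f1 f2 a2 b2 c2 x.
Proof.
  intros Hf1 Hf2 Ha1 Ha2 Hne Hx1 Hx2 Hval Hder.
  destruct (Rtotal_order b1 b2) as [Hb|[Hb|Hb]].
  - destruct (core_lt f1 f2 a2 a1 b2 b1 c2 c1 xp Hf1 Hf2 Ha2 Ha1 Hb Hx2 Hx1 (eq_sym Hval) (eq_sym Hder))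
      as [A B].
    split; [lra|split; [auto|]]. intros x y1 y2 y3 E. apply (B x y2 y1 y3). auto.
  - exfalso. subst b2. unfold fabc, brD in *.
    destruct (Rlt_dec (- b1) xp).
    + pose proof (sh_dneg f1 Hf1 (xp + b1) ltac:(lra)).
      assert (a1 = a2) by nra. subst a2. assert (c1 = c2) by lra. subst. auto.
    + pose proof (sh_dneg f2 Hf2 (- xp - b1) ltac:(lra)).
      assert (a1 = a2) by nra. subst a2. assert (c1 = c2) by lra. subst. auto.
  - destruct (core_lt f1 f2 a1 a2 b1 b2 c1 c2 xp Hf1 Hf2 Ha1 Ha2 Hb Hx1 Hx2 Hval Hder) as [A B].
    split; [lra|split; auto].
Qed.


Lemma ball_R (x e t : R) : ball x e t -> Rabs (t - x) < e.
Proof.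
  intros Hz. unfold ball in Hz; simpl in Hz; unfold AbsRing_ball, abs, minus, plus, opp in Hz; simpl in Hz.
  exact Hz.
Qed.

Lemma Derive_fabc f1 f2 a b c x :
  strongly_hyperbolic f1 -> strongly_hyperbolic f2 -> x <> - b ->
  Derive (fabc f1 f2 a b c) x = brD f1 f2 a b x.
Proof.
  intros Hf1 Hf2 Hx. unfold brD.
  destruct (Rlt_dec (- b) x) as [L|L].
  - rewrite (Derive_ext_loc _ (fun y => a * f1 (y + b) + c)).
    + apply is_derive_unique. auto_derive. apply (sh_ex f1 Hf1). lra.
      rewrite Rmult_1_l. reflexivity.
    + assert (He : 0 < x + b) by lra. exists (mkposreal _ He). intros t Ht.
      apply ball_R in Ht. simpl in Ht. apply Rabs_def2 in Ht. unfold fabc.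
      destruct (Rlt_dec (- b) t); [reflexivity|lra].
  - rewrite (Derive_ext_loc _ (fun y => - a * f2 (- y - b) + c)).
    + apply is_derive_unique. auto_derive. apply (sh_ex f2 Hf2). lra.
      replace (- x + - b) with (- x - b) by ring. change (fun x0 : R => f2 x0) with f2. ring.
    + assert (He : 0 < - b - x) by lra. exists (mkposreal _ He). intros t Ht.
      apply ball_R in Ht. simpl in Ht. apply Rabs_def2 in Ht. unfold fabc.
      destruct (Rlt_dec (- b) t); [lra|reflexivity].
Qed.

Theorem lemma4p9 (f1 f2 : R -> R) (a1 a2 b1 b2 c1 c2 : R) (p : Pt) :
  strongly_hyperbolic f1 -> strongly_hyperbolic f2 ->
  0 < a1 -> 0 < a2 ->
  (a1, b1, c1) <> (a2, b2, c2) ->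
  ( (exists b : R, p = (Some b, None) /\ a1 = a2 /\ b1 = - b /\ b2 = - b /\ c1 <> c2)
    \/ (exists c : R, p = (None, Some c) /\ a1 = a2 /\ b1 <> b2 /\ c1 = c /\ c2 = c)
    \/ (exists xp yp : R, p = (Some xp, Some yp) /\ xp <> - b1 /\ xp <> - b2 /\
          fabc f1 f2 a1 b1 c1 xp = yp /\ fabc f1 f2 a2 b2 c2 xp = yp /\
          Derive (fabc f1 f2 a1 b1 c1) xp = Derive (fabc f1 f2 a2 b2 c2) xp) ) ->
  forall q : Pt, (Dbar f1 f2 a1 b1 c1 q /\ Dbar f1 f2 a2 b2 c2 q) <-> q = p.
Proof.
  intros Hf1 Hf2 Ha1 Ha2 Hne Hcase q.
  destruct Hcase as [[b [Hp [Ha [Hb1 [Hb2 Hc]]]]] | [[c [Hp [Ha [Hb [Hc1 Hc2]]]]] | [xp [yp [Hp [Hx1 [Hx2 [Hv1 [Hv2 Hd]]]]]]]]].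
  - subst p a2 b1 b2. split.
    + intros [[[x [Hx E]] | [E | E]] [[x' [Hx' E']] | [E' | E']]]; subst q; try discriminate.
      * inversion E'. subst x'. exfalso. unfold fabc in H1.
        destruct (Rlt_dec (- - b) x); lra.
      * f_equal. f_equal. ring.
      * inversion E'. lra.
    + intros ->. split; right; left; f_equal; f_equal; ring.
  - subst p a2 c1 c2. split.
    + intros [[[x [Hx E]] | [E | E]] [[x' [Hx' E']] | [E' | E']]]; subst q; try discriminate.
      * inversion E'. subst x'. exfalso. unfold fabc in H1.
        destruct (Rlt_dec (- b1) x); destruct (Rlt_dec (- b2) x).
        -- destruct (Rtotal_order b1 b2) as [L|[L|L]]; [|lra|].
           ++ pose proof (sh_decr f1 Hf1 (x + b1) (x + b2) ltac:(lra) ltac:(lra)). nra.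
           ++ pose proof (sh_decr f1 Hf1 (x + b2) (x + b1) ltac:(lra) ltac:(lra)). nra.
        -- pose proof (sh_pos f1 Hf1 (x + b1) ltac:(lra)).
           pose proof (sh_pos f2 Hf2 (- x - b2) ltac:(lra)). nra.
        -- pose proof (sh_pos f1 Hf1 (x + b2) ltac:(lra)).
           pose proof (sh_pos f2 Hf2 (- x - b1) ltac:(lra)). nra.
        -- destruct (Rtotal_order b1 b2) as [L|[L|L]]; [|lra|].
           ++ pose proof (sh_decr f2 Hf2 (- x - b2) (- x - b1) ltac:(lra) ltac:(lra)). nra.
           ++ pose proof (sh_decr f2 Hf2 (- x - b1) (- x - b2) ltac:(lra) ltac:(lra)). nra.
      * inversion E'. lra.
      * reflexivity.
    + intros ->. split; right; right; reflexivity.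
  - subst p. rewrite (Derive_fabc f1 f2 a1 b1 c1 xp Hf1 Hf2 Hx1),
      (Derive_fabc f1 f2 a2 b2 c2 xp Hf1 Hf2 Hx2) in Hd.
    destruct (core f1 f2 a1 a2 b1 b2 c1 c2 xp Hf1 Hf2 Ha1 Ha2 Hne Hx1 Hx2 ltac:(congruence) Hd)
      as [Hb [Hc Hx]].
    split.
    + intros [[[x [Hx' E]] | [E | E]] [[x' [Hx'' E']] | [E' | E']]]; subst q; try discriminate.
      * inversion E'. subst x'.
        destruct (Req_dec x xp) as [->|Hne']. congruence.
        exfalso. apply (Hx x Hx' Hx'' Hne'). auto.
      * inversion E'. lra.
      * inversion E'. lra.
    + intros ->. split; left; [exists xp | exists xp]; split; auto; congruence.
Qed.
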